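(* If $k$ is $\vee$-irreducible in $\mathsf V$ (i.e. $k\le u\vee v$ implies $k\le u$ or $k\le v$), then for every $\mathsf V$-category $X$ the L-closure operator defines a topology on $X$ (whose closed sets are the $M$ with $\overline M=M$) such that every $\mathsf V$-functor becomes continuous. Hence L-closure defines a functor $L:\mathsf{Cat}(\mathsf V)\to\mathsf{Top}$.
   Context: Let $\mathsf V=(\mathsf V,\otimes,k)$ be a commutative unital quantale (complete lattice with commutative associative $\otimes$, neutral element $k$, $u\otimes(-)$ preserving suprema). A $\mathsf V$-category $(X,a)$ is a set with $a:X\times X\to\mathsf V$, $k\le a(x,x)$, $a(x,y)\otimes a(y,z)\le a(x,z)$; a $\mathsf V$-functor $f:(X,a)\to(Y,b)$ satisfies $a(x,y)\le b(f(x),f(y))$; $\mathsf{Cat}(\mathsf V)$ is the resulting category. For points, $u\cong v$ in $(Z,c)$ means $k\le c(u,v)$ and $k\le c(v,u)$. The L-closure of $M\subseteq X$ is $\overline M=\{x\in X\mid$ for all $\mathsf V$-functors $g,h:X\to Z$ with $g|_M=h|_M$ one has $g(x)\cong h(x)\}$. *)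

(* Defs.v *)
Record Quantale := {
  qcar :> Type;
  qle : qcar -> qcar -> Prop;
  qsup : (qcar -> Prop) -> qcar;
  qten : qcar -> qcar -> qcar;
  qk : qcar;
  qle_refl : forall u, qle u u;
  qle_trans : forall u v w, qle u v -> qle v w -> qle u w;
  qle_antisym : forall u v, qle u v -> qle v u -> u = v;
  qsup_ub : forall (S : qcar -> Prop) u, S u -> qle u (qsup S);
  qsup_least : forall (S : qcar -> Prop) w,
      (forall u, S u -> qle u w) -> qle (qsup S) w;
  qten_assoc : forall u v w, qten u (qten v w) = qten (qten u v) w;
  qten_comm : forall u v, qten u v = qten v u;
  qten_unit : forall u, qten qk u = u;
  qten_sup : forall u (S : qcar -> Prop),
      qten u (qsup S) = qsup (fun y => exists x, S x /\ y = qten u x)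
}.

Arguments qle {_}.
Arguments qsup {_}.
Arguments qten {_}.
Arguments qk {_}.

Definition qjoin {V : Quantale} (u v : V) : V := qsup (fun x => x = u \/ x = v).
Definition qbot (V : Quantale) : V := qsup (fun _ : V => False).

Definition k_join_irreducible (V : Quantale) : Prop :=
  ~ qle (@qk V) (qbot V) /\
  forall u v : V, qle qk (qjoin u v) -> qle qk u \/ qle qk v.

Record VCat (V : Quantale) := {
  vobj :> Type;
  vhom : vobj -> vobj -> V;
  vhom_refl : forall x, qle qk (vhom x x);
  vhom_trans : forall x y z, qle (qten (vhom x y) (vhom y z)) (vhom x z)
}.
Arguments vhom {_ _}.

Definition VFunctor {V : Quantale} (X Y : VCat V) (f : X -> Y) : Prop :=
  forall x y : X, qle (vhom x y) (vhom (f x) (f y)).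

Definition viso {V : Quantale} {Z : VCat V} (u v : Z) : Prop :=
  qle qk (vhom u v) /\ qle qk (vhom v u).

Definition Lclosure {V : Quantale} (X : VCat V) (M : X -> Prop) : X -> Prop :=
  fun x => forall (Z : VCat V) (g h : X -> Z),
    VFunctor X Z g -> VFunctor X Z h ->
    (forall m, M m -> g m = h m) -> viso (g x) (h x).

Definition Lclosed {V : Quantale} (X : VCat V) (M : X -> Prop) : Prop :=
  forall x, Lclosure X M x <-> M x.

Definition is_closed_sets_of_topology {T : Type} (C : (T -> Prop) -> Prop) : Prop :=
  C (fun _ => False) /\
  C (fun _ => True) /\
  (forall A B, C A -> C B -> C (fun x => A x \/ B x)) /\
  (forall (F : (T -> Prop) -> Prop), (forall A, F A -> C A) ->
       C (fun x => forall A, F A -> A x)).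

Definition kuratowski {T : Type} (cl : (T -> Prop) -> (T -> Prop)) : Prop :=
  (forall x, ~ cl (fun _ => False) x) /\
  (forall A x, A x -> cl A x) /\
  (forall A x, cl (cl A) x <-> cl A x) /\
  (forall A B x, cl (fun y => A y \/ B y) x <-> (cl A x \/ cl B x)).

(* Main.v *)
Require Import Defs.
From Stdlib Require Import ClassicalEpsilon.

Section Q.
Variable V : Quantale.

Lemma ten_monor (u v w : V) : qle u v -> qle (qten w u) (qten w v).
Proof.
  intro H.
  assert (E : qsup (fun x => x = u \/ x = v) = v).
  { apply qle_antisym.
    - apply qsup_least. intros z [->| ->]; [exact H | apply qle_refl].
    - apply qsup_ub; auto. }
  rewrite <- E. rewrite qten_sup. apply qsup_ub. exists u; auto.
Qed.

Lemma ten_mono (u u' v v' : V) : qle u u' -> qle v v' -> qle (qten u v) (qten u' v').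
Proof.
  intros H1 H2. eapply qle_trans. apply ten_monor; exact H2.
  rewrite (qten_comm _ u), (qten_comm _ u'). apply ten_monor; exact H1.
Qed.

Lemma ten_sup_le (w c : V) (S : V -> Prop) :
  (forall x, S x -> qle (qten w x) c) -> qle (qten w (qsup S)) c.
Proof.
  intro H. rewrite qten_sup. apply qsup_least. intros y [x [Sx ->]]. auto.
Qed.

Lemma k_ten (u v : V) : qle qk u -> qle v (qten u v).
Proof.
  intro H. rewrite <- (qten_unit V v) at 1. apply ten_mono; [exact H| apply qle_refl].
Qed.

Lemma k_ten_r (u v : V) : qle qk u -> qle v (qten v u).
Proof. intro H. rewrite qten_comm. apply k_ten; exact H. Qed.

Variable X : VCat V.

Definition cross (M : X -> Prop) (x y : X) : V :=
  qsup (fun z => exists m, M m /\ z = qten (vhom x m) (vhom m y)).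

Lemma cross_ub (M : X -> Prop) x y m : M m -> qle (qten (vhom x m) (vhom m y)) (cross M x y).
Proof. intro Hm. apply qsup_ub. eauto. Qed.

Lemma cross_le_a M x y : qle (cross M x y) (vhom x y).
Proof. apply qsup_least. intros z [m [_ ->]]. apply vhom_trans. Qed.

Lemma a_cross M x y z : qle (qten (vhom x y) (cross M y z)) (cross M x z).
Proof.
  apply ten_sup_le. intros w [m [Hm ->]].
  eapply qle_trans; [| apply (cross_ub M x z m Hm)].
  rewrite qten_assoc. apply ten_mono; [apply vhom_trans | apply qle_refl].
Qed.

Lemma cross_a M x y z : qle (qten (cross M x y) (vhom y z)) (cross M x z).
Proof.
  rewrite qten_comm. apply ten_sup_le. intros w [m [Hm ->]].
  eapply qle_trans; [| apply (cross_ub M x z m Hm)].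
  rewrite qten_comm, <- qten_assoc. apply ten_mono; [apply qle_refl | apply vhom_trans].
Qed.

Definition zhom (M : X -> Prop) (p q : X * bool) : V :=
  if Bool.eqb (snd p) (snd q) then vhom (fst p) (fst q) else cross M (fst p) (fst q).

Lemma zrefl M p : qle qk (zhom M p p).
Proof. destruct p as [x []]; unfold zhom; simpl; apply vhom_refl. Qed.

Lemma ztrans M p q r : qle (qten (zhom M p q) (zhom M q r)) (zhom M p r).
Proof.
  destruct p as [x i], q as [y j], r as [z l]; unfold zhom; simpl.
  destruct i, j, l; simpl;
  first [ apply vhom_trans | apply a_cross | apply cross_a
        | (eapply qle_trans; [apply ten_mono; apply cross_le_a | apply vhom_trans])].
Qed.

Definition ZC (M : X -> Prop) : VCat V :=
  {| vobj := X * bool; vhom := zhom M; vhom_refl := zrefl M; vhom_trans := ztrans M |}.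

Lemma Lclosure_iff M x : Lclosure X M x <-> qle qk (cross M x x).
Proof.
  split.
  - intro H.
    set (d := fun y => if excluded_middle_informative (M y) then false else true).
    assert (Hg : VFunctor X (ZC M) (fun y => (y, false))).
    { intros a b. unfold ZC, zhom; simpl. apply qle_refl. }
    assert (Hh : VFunctor X (ZC M) (fun y => (y, d y))).
    { intros a b. unfold ZC, zhom, d; simpl.
      destruct (excluded_middle_informative (M a)) as [Ha|Ha];
      destruct (excluded_middle_informative (M b)) as [Hb|Hb]; simpl;
      try apply qle_refl.
      - eapply qle_trans; [| apply (cross_ub M a b a Ha)]. apply k_ten, vhom_refl.
      - eapply qle_trans; [| apply (cross_ub M a b b Hb)]. apply k_ten_r, vhom_refl. }
    specialize (H (ZC M) _ _ Hg Hh).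
    assert (Hagree : forall m, M m -> (m, false) = (m, d m)).
    { intros m Hm. unfold d. destruct (excluded_middle_informative (M m)); tauto. }
    destruct (H Hagree) as [H1 _]. revert H1. unfold ZC, zhom, d; simpl.
    destruct (excluded_middle_informative (M x)) as [Hx|Hx]; simpl; auto.
    intro. eapply qle_trans; [| apply (cross_ub M x x x Hx)].
    eapply qle_trans; [apply vhom_refl|]. apply k_ten, vhom_refl.
  - intros H Z g h Hg Hh Hgh. split.
    + eapply qle_trans; [exact H|]. apply qsup_least. intros w [m [Hm ->]].
      eapply qle_trans; [apply ten_mono; [apply (Hg x m) | apply (Hh m x)]|].
      rewrite (Hgh m Hm). apply vhom_trans.
    + eapply qle_trans; [exact H|]. apply qsup_least. intros w [m [Hm ->]].
      eapply qle_trans; [apply ten_mono; [apply (Hh x m) | apply (Hg m x)]|].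
      rewrite <- (Hgh m Hm). apply vhom_trans.
Qed.
End Q.

Lemma cross_mono V (X : VCat V) (A B : X -> Prop) x y :
  (forall z, A z -> B z) -> qle (cross V X A x y) (cross V X B x y).
Proof.
  intro H. apply qsup_least. intros w [m [Hm ->]]. apply cross_ub; auto.
Qed.

Lemma cl_mono V (X : VCat V) (A B : X -> Prop) x :
  (forall z, A z -> B z) -> Lclosure X A x -> Lclosure X B x.
Proof.
  intros H. rewrite !Lclosure_iff. intro. eapply qle_trans; [eassumption|].
  apply cross_mono; auto.
Qed.

Lemma cl_idem V (X : VCat V) (M : X -> Prop) x :
  Lclosure X (Lclosure X M) x -> Lclosure X M x.
Proof.
  rewrite !Lclosure_iff. intro H. eapply qle_trans; [exact H|].
  apply qsup_least. intros w [y [Hy ->]]. rewrite Lclosure_iff in Hy.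
  eapply qle_trans; [| apply (a_cross V X M x y x)].
  apply ten_mono; [apply qle_refl|].
  eapply qle_trans; [| apply (cross_a V X M y y x)].
  apply k_ten; exact Hy.
Qed.

Theorem mainTheorem8 (V : Quantale) :
  k_join_irreducible V ->
  (forall X : VCat V,
      kuratowski (Lclosure X) /\
      is_closed_sets_of_topology (Lclosed X)) /\
  (forall (X Y : VCat V) (f : X -> Y), VFunctor X Y f ->
      forall N : Y -> Prop, Lclosed Y N -> Lclosed X (fun x => N (f x))).
Proof.
  intros [Hbot Hjoin].
  assert (Hempty : forall (X : VCat V) x, ~ Lclosure X (fun _ => False) x).
  { intros X x H. rewrite Lclosure_iff in H. apply Hbot.
    eapply qle_trans; [exact H|]. apply qsup_least. intros w [m [[] _]]. }
  assert (Hext : forall (X : VCat V) A x, A x -> Lclosure X A x).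
  { intros X A x Ax Z g h _ _ Hgh. rewrite (Hgh x Ax). split; apply vhom_refl. }
  assert (Hunion : forall (X : VCat V) (A B : X -> Prop) x,
             Lclosure X (fun y => A y \/ B y) x <-> Lclosure X A x \/ Lclosure X B x).
  { intros X A B x. split.
    - rewrite !Lclosure_iff. intro H. apply Hjoin.
      eapply qle_trans; [exact H|]. apply qsup_least. intros w [m [[Hm|Hm] ->]].
      + eapply qle_trans; [apply (cross_ub V X A x x m Hm)|]. apply qsup_ub; auto.
      + eapply qle_trans; [apply (cross_ub V X B x x m Hm)|]. apply qsup_ub; auto.
    - intros [H|H]; eapply cl_mono; try exact H; simpl; auto. }
  split.
  - intro X. split.
    + split; [apply Hempty|]. split; [apply Hext|]. split.
      * intros A x. split; [apply cl_idem | apply Hext].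
      * apply Hunion.
    + split; [| split; [| split]].
      * intro x. split; [apply Hempty | intros []].
      * intro x. split; auto.
      * intros A B HA HB x. rewrite Hunion, (HA x), (HB x). tauto.
      * intros F HF x. split; [| intro; apply Hext; assumption].
        intros H A FA. apply (HF A FA). eapply cl_mono; [| exact H]. intros z Hz. exact (Hz A FA).
  - intros X Y f Hf N HN x. split; [| intro; apply Hext; assumption].
    intro H. apply HN. rewrite Lclosure_iff in *.
    eapply qle_trans; [exact H|]. apply qsup_least. intros w [m [Hm ->]].
    eapply qle_trans; [| apply (cross_ub V Y N (f x) (f x) (f m) Hm)].
    apply ten_mono; apply Hf.
Qed.
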